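(* Let $G_S(z)=\frac{N_S(z)}{D_S(z)}$ and $G_T(z)=\frac{N_T(z)}{D_T(z)}$ be rational transfer functions (in the forward shift operator $z$) of two discrete-time, single-input single-output, linear time-invariant systems (the source system and the target system), each written with coprime real polynomials and nonzero numerator. Assume both $G_S$ and $G_T$ are BIBO stable, and assume $G_S$ is minimum-phase. Then there exists a causal, BIBO stable rational transfer function $G_\alpha(z)$ achieving perfect transfer learning from the source to the target system, i.e. such that $G_\alpha(z)G_S(z)=G_T(z)$ (equivalently, for every bounded input $d$, feeding the source output $y_s$ into $G_\alpha$ yields exactly the target output $y_t$), if and only if the relative degree of $G_S$ is less than or equal to the relative degree of $G_T$.
   Context: For a rational transfer function $G(z)=N(z)/D(z)$ with coprime polynomials $N,D$, the relative degree is $\deg D-\deg N$. $G$ is causal if its relative degree is $\geq 0$. $G$ is BIBO stable if all roots of $D(z)$ lie in the open unit disk. $G$ is called minimum-phase if both $G$ and its inverse dynamics $1/G$ are BIBO stable, i.e. all roots of both $D(z)$ and $N(z)$ lie in the open unit disk. Perfect transfer learning means the transfer learning error $e=y_t-y_{TL}$ is identically zero for every bounded input, where $y_{TL}$ is the output of the map driven by $y_s$. *)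

(* Defs.v *)
From HB Require Import structures.
From mathcomp Require Import all_boot all_order all_algebra.
From mathcomp Require Import reals.
From mathcomp.real_closed Require Import complex.
Set Implicit Arguments. Unset Strict Implicit. Unset Printing Implicit Defensive.
Import Order.TTheory GRing.Theory Num.Theory.
Local Open Scope ring_scope.

Record tf (R : realType) := TF { tf_num : {poly R}; tf_den : {poly R} }.

Definition coprime_tf (R : realType) (G : tf R) : Prop :=
  tf_den G != 0 /\ coprimep (tf_num G) (tf_den G).

(* relative degree deg D - deg N (as an integer; size = degree + 1). *)
Definition reldeg (R : realType) (G : tf R) : int :=
  (size (tf_den G))%:Z - (size (tf_num G))%:Z.

Definition causal (R : realType) (G : tf R) : Prop := (0 <= reldeg G).

Definition roots_in_unit_disk (R : realType) (p : {poly R}) : Prop :=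
  forall z : R[i], root (map_poly (real_complex R) p) z -> `|z| < 1.

Definition bibo_stable (R : realType) (G : tf R) : Prop :=
  roots_in_unit_disk (tf_den G).

Definition minimum_phase (R : realType) (G : tf R) : Prop :=
  roots_in_unit_disk (tf_den G) /\ roots_in_unit_disk (tf_num G).

(* Ga * Gs = Gt as rational functions (cross-multiplied, all denominators nonzero) *)
Definition tf_mul_eq (R : realType) (Ga Gs Gt : tf R) : Prop :=
  tf_num Ga * tf_num Gs * tf_den Gt = tf_num Gt * (tf_den Ga * tf_den Gs).

(* Main.v *)
Require Import Defs.
From HB Require Import structures.
From mathcomp Require Import all_boot all_order all_algebra.
From mathcomp Require Import reals.
From mathcomp.real_closed Require Import complex.
From mathcomp Require Import zify ring.
Import Order.TTheory GRing.Theory Num.Theory.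
Local Open Scope ring_scope.

Lemma szp (R : realType) (p : {poly R}) : p != 0 -> (0 < size p)%N.
Proof. by rewrite size_poly_gt0. Qed.

Lemma ar1 (a s t n d e : nat) : (0 < a)%N -> (0 < s)%N -> (0 < t)%N ->
  (0 < n)%N -> (0 < d)%N -> (0 < e)%N ->
  (a + s - 1 + t - 1 = n + (d + e - 1) - 1)%N ->
  (0:int) <= (d:int) - (a:int) -> (e:int) - (s:int) <= (t:int) - (n:int).
Proof. lia. Qed.

Lemma ar2 (a d g n ds t s : nat) : (0 < a)%N -> (0 < d)%N -> (0 < g)%N ->
  (0 < n)%N -> (0 < ds)%N -> (0 < t)%N -> (0 < s)%N ->
  (a + g - 1 = n + ds - 1)%N -> (d + g - 1 = t + s - 1)%N ->
  (ds:int) - (s:int) <= (t:int) - (n:int) -> (0:int) <= (d:int) - (a:int).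
Proof. lia. Qed.

Theorem theorem2 (R : realType) (Gs Gt : tf R) :
  coprime_tf Gs -> tf_num Gs != 0 ->
  coprime_tf Gt -> tf_num Gt != 0 ->
  bibo_stable Gs -> bibo_stable Gt -> minimum_phase Gs ->
  (exists Ga : tf R,
      coprime_tf Ga /\ causal Ga /\ bibo_stable Ga /\ tf_mul_eq Ga Gs Gt)
  <-> (reldeg Gs <= reldeg Gt).
Proof.
case: Gs Gt => Ns Ds [Nt Dt]; rewrite /coprime_tf /reldeg /causal /bibo_stable
  /minimum_phase /tf_mul_eq /=.
move=> [Ds0 _] Ns0 [Dt0 _] Nt0 _ stDt [_ stNs]; split.
  move=> [[Na Da] /= [[Da0 _] [cau [_ E]]]].
  have Na0 : Na != 0.
    apply/eqP=> Na0; move: E; rewrite Na0 !mul0r => /esym/eqP.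
    by rewrite !mulf_eq0 (negPf Nt0) (negPf Da0) (negPf Ds0).
  have E' := congr1 (fun x : {poly R} => size x) E.
  rewrite /= !size_mul ?mulf_neq0 // -!subn1 in E'.
  rewrite /reldeg /= in cau *.
  exact: (@ar1 _ _ _ _ _ _ (szp _ _ Na0) (szp _ _ Ns0) (szp _ _ Dt0) (szp _ _ Nt0) (szp _ _ Da0) (szp _ _ Ds0) E' cau).
move=> H.
set p := Nt * Ds; set q := Dt * Ns; set g := gcdp p q.
have p0 : p != 0 by rewrite mulf_neq0.
have q0 : q != 0 by rewrite mulf_neq0.
have g0 : g != 0 by rewrite gcdp_eq0 negb_and p0.
have Ep : p %/ g * g = p by rewrite divpK // dvdp_gcdl.
have Eq : q %/ g * g = q by rewrite divpK // dvdp_gcdr.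
have Na0 : p %/ g != 0 by apply: contra p0 => /eqP E0; rewrite -Ep E0 mul0r.
have Da0 : q %/ g != 0 by apply: contra q0 => /eqP E0; rewrite -Eq E0 mul0r.
exists (TF (p %/ g) (q %/ g)) => /=; split; first split => //.
  by apply: coprimep_div_gcd; rewrite p0.
split.
  have E1 := congr1 (fun x : {poly R} => size x) Ep.
  have E2 := congr1 (fun x : {poly R} => size x) Eq.
  rewrite /= /p /q !size_mul // -!subn1 in E1 E2.
  exact: (@ar2 _ _ _ _ _ _ _ (szp _ _ Na0) (szp _ _ Da0) (szp _ _ g0) (szp _ _ Nt0) (szp _ _ Ds0) (szp _ _ Dt0) (szp _ _ Ns0) E1 E2 H).
split.
  move=> z rz; have : root (map_poly (real_complex R) q) z.
    by rewrite -Eq rmorphM /= rootM rz.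
  rewrite /q rmorphM /= rootM => /orP [] ?; [exact: stDt | exact: stNs].
apply: (mulIf g0).
set a := p %/ g in Ep *; set d := q %/ g in Eq *.
transitivity ((a * g) * (Ns * Dt)); first ring.
rewrite Ep -[Dt in LHS](mulr1 Dt) -[Ns in LHS](mulr1 Ns).
transitivity (Nt * (d * g) * Ds); last ring.
by rewrite Eq /p /q; ring.
Qed.
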